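(* Let $X$ be a finite set, $\equiv$ an equivalence relation on $X$, and $k$ a natural number. Let $\mathcal{B}$ be the set of subsets $B \subseteq X$ with $|B| = k$ such that not all $k$ elements of $B$ are equivalent under $\equiv$. If $\mathcal{B} \neq \emptyset$, then $\mathcal{B}$ is the set of bases of a matroid on $X$. *)

(* Defs.v *)
From mathcomp Require Import all_boot.
Set Implicit Arguments. Unset Strict Implicit. Unset Printing Implicit Defensive.

Definition is_matroid_bases (T : finType) (bases : {set {set T}}) : Prop :=
  bases != set0 /\
  forall B1 B2, B1 \in bases -> B2 \in bases ->
    forall x, x \in B1 :\: B2 ->
      exists2 y, y \in B2 :\: B1 & (y |: (B1 :\ x)) \in bases.

Definition not_all_equiv_ksets (T : finType) (e : rel T) (k : nat) : {set {set T}} :=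
  [set B : {set T} | (#|B| == k) && ~~ [forall x in B, forall y in B, e x y]].

(* Main.v *)
Require Import Defs.
From mathcomp Require Import all_boot.

Lemma notallP (T : finType) (e : rel T) (B : {set T}) :
  reflect (exists a, exists2 b, (a \in B) && (b \in B) & ~~ e a b)
          (~~ [forall x in B, forall y in B, e x y]).
Proof.
apply: (iffP idP).
- move=> /forall_inPn [a aB /forallPn [b]]; rewrite negb_imply => /andP[bB nab].
  by exists a; exists b; rewrite ?aB ?bB.
- move=> [a [b /andP[aB bB] nab]]; apply/forall_inPn; exists a => //.
  by apply/forallPn; exists b; rewrite negb_imply bB.
Qed.

Theorem proposition3p16 (T : finType) (e : rel T) (k : nat) :
  equivalence_rel e ->
  not_all_equiv_ksets e k != set0 ->
  is_matroid_bases (not_all_equiv_ksets e k).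
Proof.
move=> eqe ne; split => // B1 B2.
have refl z : e z z by case: (eqe z z z).
have sym a b : e a b -> e b a.
  by move=> hab; have [_ h] := eqe a b a; rewrite -(h hab) refl.
have trans a b c : e a b -> e b c -> e a c.
  by move=> hab hbc; have [_ /(_ hab) ->] := eqe a b c.
rewrite !inE => /andP[/eqP c1 /notallP n1] /andP[/eqP c2 /notallP n2] x.
rewrite inE => /andP[xB2 xB1].
have sz y : y \in B2 :\: B1 -> #|y |: (B1 :\ x)| == k.
  rewrite inE => /andP[yB1 _].
  rewrite cardsU1 !inE negb_and yB1 orbT.
  by rewrite -c1 (cardsD1 x B1) xB1.
have hex : exists y, y \in B2 :\: B1.
  apply/set0Pn; rewrite -card_gt0 cardsD setIC c2 -c1 -cardsD.
  by rewrite card_gt0; apply/set0Pn; exists x; rewrite inE xB2 xB1.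
case: (boolP [forall a in B1 :\ x, forall b in B1 :\ x, e a b]) => hall; last first.
  case: hex => y hy; exists y => //; rewrite inE sz //=.
  move/notallP: hall => [a [b /andP[aB bB] nab]].
  by apply/notallP; exists a; exists b; rewrite ?nab //; apply/andP; split; apply/setU1P; right.
have [z zB] : exists z, z \in B1 :\ x.
  case: n1 => a [b /andP[aB bB] nab].
  case: (eqVneq a x) => [ax|ax]; last by exists a; rewrite !inE ax.
  case: (eqVneq b x) => [bx|bx]; last by exists b; rewrite !inE bx.
  by rewrite ax bx refl in nab.
have [y yB2 nzy] : exists2 y, y \in B2 & ~~ e z y.
  case: n2 => a [b /andP[aB bB] nab].
  case: (boolP (e z a)) => za; last by exists a.
  exists b => //; apply/negP => zb; move/negP: nab; apply.
  exact: trans (sym _ _ za) zb.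
have yB1 : y \notin B1.
  apply/negP => yB1; case: (eqVneq y x) => [yx|yx].
    by move: xB2; rewrite -yx yB2.
  have yB : y \in B1 :\ x by rewrite !inE yx.
  by move/forall_inP: hall => /(_ z zB) /forall_inP /(_ y yB); apply/negP.
have hy : y \in B2 :\: B1 by rewrite inE yB1 yB2.
exists y => //; rewrite inE sz //=.
apply/notallP; exists z; exists y => //.
by apply/andP; split; apply/setU1P; [right|left].
Qed.
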